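(* Let $b$ be a Blaschke product with zeros $(a_n)_{n\ge1}$ (with multiplicity), $\Omega$ an approach region at $1$ and $m\ge0$ an integer, and assume $\sup_{z\in\Omega}\sum_n\frac{1-|a_n|^2}{|1-\overline{a_n}z|^{2m+2}}<\infty$. For integers $0\le k,l\le m$ and $z\in\Omega\cup\{1\}$ define the sequence $A_{k,l,z}=(A_{k,l,z}(n))_{n\ge1}$ by \[A_{k,l,z}(n)=\frac{1-|a_n|^2}{(1-\overline{a_n}z)^{1+k}(1-a_n\overline{z})^{1+l}}.\] Then for $k+l<2m$, $\lim_{z\to1,\,z\in\Omega}\|A_{k,l,z}-A_{k,l,1}\|_{\ell^1}=0$.
   Context: $\|x\|_{\ell^1}=\sum_n|x(n)|$. An approach region at $1$ is an open simply connected $\Omega\subset\mathbb{D}$ (unit disk) with $\partial\Omega\cap\mathbb{T}=\{1\}$ such that for $z\in\Omega$ close to $1$ the segment $[z,1]\subset\Omega$. *)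

(* Defs.v *)
From mathcomp Require Import all_boot all_order all_algebra.
From mathcomp Require Import all_classical all_reals all_analysis.
From mathcomp Require Import complex.
Import Order.TTheory GRing.Theory Num.Theory.
Import numFieldTopology.Exports numFieldNormedType.Exports.

Set Implicit Arguments.
Unset Strict Implicit.
Unset Printing Implicit Defensive.

Local Open Scope ring_scope.
Local Open Scope classical_set_scope.

Definition Cx (R : realType) : numClosedFieldType := R[i].

Definition cabs (R : realType) (z : Cx R) : R := Normc.normc z.

Definition rC (R : realType) (t : R) : Cx R := (t%:C)%C.

Definition unit_disk (R : realType) : set (Cx R) := [set z | `|z| < 1].

Definition unit_circle (R : realType) : set (Cx R) := [set z | `|z| = 1].

Definition boundary (R : realType) (A : set (Cx R)) : set (Cx R) :=
  closure A `\` interior A.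

Definition simply_connected (R : realType) (U : set (Cx R)) : Prop :=
  connected U /\
  forall gamma : R -> Cx R,
    {within `[0, 1]%classic, continuous gamma} ->
    gamma @` `[0, 1]%classic `<=` U ->
    gamma 0 = gamma 1 ->
    exists H : R * R -> Cx R,
      [/\ {within `[0, 1]%classic `*` `[0, 1]%classic, continuous H},
          H @` (`[0, 1]%classic `*` `[0, 1]%classic) `<=` U,
          (forall t, 0 <= t <= 1 -> H (0, t) = gamma t /\ H (1, t) = gamma 0) &
          (forall s, 0 <= s <= 1 -> H (s, 0) = gamma 0 /\ H (s, 1) = gamma 0)].

(* Approach region at 1. The segment [z,1] is read as the half-open
   segment [z,1) since 1 never lies in Omega (Omega is inside D). *)
Definition approach_region (R : realType) (Omega : set (Cx R)) : Prop :=
  [/\ open Omega,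
      simply_connected Omega,
      Omega `<=` @unit_disk R,
      boundary Omega `&` @unit_circle R = [set 1] &
      exists2 delta : R, 0 < delta &
        forall z, Omega z -> cabs (z - 1) < delta ->
          forall t : R, 0 <= t < 1 -> Omega (rC (1 - t) * z + rC t)].

(* (a_n) is the zero sequence (with multiplicity) of a Blaschke product:
   points of D satisfying the Blaschke condition sum (1 - |a_n|) < oo. *)
Definition blaschke_zeros (R : realType) (a : nat -> Cx R) : Prop :=
  (forall n, `|a n| < 1) /\
  (\sum_(0 <= n <oo) ((1 - cabs (a n))%:E) < +oo)%E.

Definition Aseq (R : realType) (a : nat -> Cx R) (k l : nat) (z : Cx R)
  (n : nat) : Cx R :=
  (1 - `|a n| ^+ 2) /
  ((1 - (a n)^* * z) ^+ k.+1 * (1 - a n * z^*) ^+ l.+1).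

Definition ell1 (R : realType) (x : nat -> Cx R) : \bar R :=
  (\sum_(0 <= n <oo) (cabs (x n))%:E)%E.

(* Main.v *)
Require Import Defs.
From mathcomp Require Import all_boot all_order all_algebra.
From mathcomp Require Import all_classical all_reals all_analysis.
From mathcomp Require Import complex.
From mathcomp Require Import ring lra.
Import Order.TTheory GRing.Theory Num.Theory.
Import numFieldTopology.Exports numFieldNormedType.Exports.
Local Open Scope ring_scope.
Local Open Scope classical_set_scope.

Lemma cabsE (R : realType) (x : Cx R) : cabs x = complex.Re `|x|.
Proof. by []. Qed.

Lemma cabs_ge0 (R : realType) (x : Cx R) : 0 <= cabs x.
Proof. by rewrite /cabs /Normc.normc; case: x => ? ?; exact: sqrtr_ge0. Qed.

Lemma normC_cabs (R : realType) (x : Cx R) : `|x| = ((cabs x)%:C)%C.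
Proof. by []. Qed.

Lemma cabs_tri (R : realType) (x y : Cx R) : cabs x <= cabs (x - y) + cabs y.
Proof.
rewrite -lecR.
have -> : ((cabs (x - y) + cabs y)%:C)%C = `|x - y| + `|y| :> Cx R.
  by rewrite !normC_cabs rmorphD.
rewrite -normC_cabs.
by rewrite -{1}(subrK y x) ler_normD.
Qed.

Lemma powbound (R : realType) (x K : R) (p q : nat) :
  0 <= x -> 1 <= K -> (p < q)%N -> x ^+ p <= K ^+ p + x ^+ q / K.
Proof.
move=> x0 K1 pq.
have K0 : 0 < K by apply: lt_le_trans K1.
have [xK|Kx] := leP x K.
  apply: ler_wpDr; first by apply: divr_ge0 => //; [exact: exprn_ge0|exact: ltW].
  by apply: lerXn2r => //; rewrite ?nnegrE //; exact: ltW.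
apply: ler_wpDl; first by apply: exprn_ge0; exact: ltW.
rewrite ler_pdivlMr //.
have -> : q = (p + (q - p))%N by rewrite subnKC // ltnW.
rewrite exprD ler_wpM2l //; first exact: exprn_ge0.
apply: le_trans (ltW Kx) _.
apply: ler_eXnr; first by rewrite subn_gt0.
exact: le_trans (ltW Kx).
Qed.

Lemma cabs_Aseq (R : realType) (a : nat -> Cx R) k l z n :
  `|a n| < 1 ->
  cabs (Aseq a k l z n) =
  (1 - cabs (a n) ^+ 2) * (cabs (1 - (a n)^* * z))^-1 ^+ (k + l + 2).
Proof.
move=> an1.
have an1' : cabs (a n) < 1 by rewrite -ltcR -normC_cabs.
have w0 : 0 <= 1 - cabs (a n) ^+ 2.
  rewrite subr_ge0 exprn_ile1 //; last exact: ltW.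
  by rewrite -lecR -normC_cabs normr_ge0.
suff : `|Aseq a k l z n| = ((1 - cabs (a n) ^+ 2) * (cabs (1 - (a n)^* * z))^-1 ^+ (k + l + 2))%:C%C.
  by rewrite normC_cabs => -[].
rewrite /Aseq normrM normfV normrM !normrX.
have -> : 1 - a n * z^* = (1 - (a n)^* * z)^*.
  by rewrite rmorphB rmorph1 rmorphM /= conjCK.
rewrite norm_conjC.
have -> : 1 - `|a n| ^+ 2 = ((1 - cabs (a n) ^+ 2)%:C)%C :> Cx R.
  by rewrite normC_cabs rmorphB rmorph1 rmorphXn.
rewrite ger0_norm; last by rewrite lecR.
rewrite rmorphM rmorphXn fmorphV.
congr (_ * _); rewrite -exprD exprVn; congr (_ ^-1); rewrite addnS addSn -addn2; reflexivity.
Qed.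

#[local] Instance cx_nbhs_filter (R : realType) (w : Cx R) : Filter (nbhs w) := nbhs_filter w.
#[local] Instance cx_nbhs_pfilter (R : realType) (w : Cx R) : ProperFilter (nbhs w) := nbhs_pfilter w.

Lemma conj_cvg (R : realType) (w : Cx R) : (z : Cx R)^* @[z --> w] --> w^*.
Proof.
apply/(@cvgrPdist_lt _ _ _ (nbhs w) (nbhs_filter w)) => e e0; near=> z.
rewrite -rmorphB /= norm_conjC.
near: z. have := @near_ball _ _ w e e0. apply: filterS => x. by rewrite /ball /=.
Unshelve. all: by end_near.
Qed.

Lemma cvgXn (R : realType) (T : Type) (F : set_system T) {FF : Filter F}
  (f : T -> Cx R) (c : Cx R) n :
  f x @[x --> F] --> c -> f x ^+ n @[x --> F] --> c ^+ n.
Proof.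
move=> fc; elim: n => [|n IH].
  timeout 10 have -> : (fun x => f x ^+ 0) = (fun=> 1) by apply: funext => x; rewrite expr0.
  timeout 10 rewrite expr0.
  timeout 10 exact: cvg_cst.
timeout 10 have -> : (fun x => f x ^+ n.+1) = (fun x => f x * f x ^+ n).
  by apply: funext => x; rewrite exprS.
timeout 10 rewrite exprS.
timeout 10 exact: (cvgM fc IH).
Qed.

Lemma Aseq_cvg (R : realType) (a : nat -> Cx R) k l n :
  `|a n| < 1 -> Aseq a k l z n @[z --> (1 : Cx R)] --> Aseq a k l 1 n.
Proof.
move=> an1.
have d1 : 1 - (a n)^* * 1 != 0.
  rewrite mulr1 subr_eq0; apply/eqP => h.
  by move: an1; rewrite -norm_conjC -h normr1 ltxx.
have d2 : 1 - a n * 1^* != 0.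
  rewrite conjC1 mulr1 subr_eq0; apply/eqP => h.
  by move: an1; rewrite -h normr1 ltxx.
rewrite /Aseq.
set g := fun z : Cx R => ((1 - (a n)^* * z) ^+ k.+1 * (1 - a n * z^*) ^+ l.+1).
timeout 10 change (((1 - `|a n| ^+ 2) * (g z)^-1) @[z --> (1 : Cx R)] --> (1 - `|a n| ^+ 2) * (g 1)^-1).
have g1 : g z @[z --> (1 : Cx R)] --> g 1.
  have h1 : (1 - (a n)^* * z) @[z --> (1 : Cx R)] --> (1 - (a n)^* * 1).
    timeout 10 apply: cvgB; first exact: cvg_cst.
    timeout 10 apply: cvgMr; exact: cvg_id.
  have h2 : (1 - a n * z^*) @[z --> (1 : Cx R)] --> (1 - a n * 1^*).
    timeout 10 apply: cvgB; first exact: cvg_cst.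
    timeout 10 apply: cvgMr; exact: conj_cvg.
  rewrite /g; timeout 10 apply: cvgM; [exact: (cvgXn _ _ _ _ _ k.+1 h1) | exact: (cvgXn _ _ _ _ _ l.+1 h2)].
have g10 : g 1 != 0 by rewrite /g mulf_neq0 // expf_neq0.
timeout 10 apply: cvgMr; exact: (cvgV g10 g1).
Qed.

Lemma Aseq_small (R : realType) (a : nat -> Cx R) k l n (e : R) :
  `|a n| < 1 -> 0 < e ->
  \forall z \near (1 : Cx R), cabs (Aseq a k l z n - Aseq a k l 1 n) < e.
Proof.
move=> an1 e0.
have e0' : 0 < (e%:C)%C :> Cx R by rewrite ltcR.
move/cvgrPdist_lt: (Aseq_cvg _ _ k l _ an1) => /(_ _ e0').
apply: filterS => z; rewrite distrC normC_cabs ltcR; exact.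
Qed.

Lemma cabs_triB (R : realType) (x y : Cx R) : cabs (x - y) <= cabs x + cabs y.
Proof.
rewrite -lecR.
have -> : ((cabs x + cabs y)%:C)%C = `|x| + `|y| :> Cx R.
  by rewrite !normC_cabs rmorphD.
rewrite -normC_cabs; exact: ler_normB.
Qed.

Lemma cabs_tri' (R : realType) (x y : Cx R) : cabs x <= cabs (y - x) + cabs y.
Proof.
have -> : cabs (y - x) = cabs (x - y) by rewrite !cabsE distrC.
exact: cabs_tri.
Qed.

Lemma fin_small (R : realType) (a : nat -> Cx R) k l
  (a1 : forall n, `|a n| < 1) N0 j (e : R) : 0 < e ->
  \forall z \near (1 : Cx R),
    \sum_(N0 <= n < N0 + j) cabs (Aseq a k l z n - Aseq a k l 1 n) < e.
Proof.
elim: j e => [|j IH] e e0.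
  by near=> z; rewrite addn0 big_geq.
have e2 : 0 < e / 2 by rewrite divr_gt0.
near=> z.
rewrite addnS big_nat_recr /=; last exact: leq_addr.
rewrite [e]splitr; apply: ltrD; near: z; [exact: IH | exact: Aseq_small].
Unshelve. all: by end_near.
Qed.

Lemma series_le (R : realType) (u : nat -> R) (c : R) :
  (forall n, 0 <= u n) -> (forall N, \sum_(0 <= n < N) u n <= c) ->
  (\sum_(0 <= n <oo) (u n)%:E <= c%:E)%E.
Proof.
move=> u0 hu; apply: lime_le.
  by apply: is_cvg_nneseries => n _ _; rewrite lee_fin.
by apply: nearW => N; rewrite sumEFin lee_fin.
Qed.

Lemma tail_w (R : realType) (a : nat -> Cx R) (a1 : forall n, `|a n| < 1)
  (bl : (\sum_(0 <= n <oo) ((1 - cabs (a n))%:E) < +oo)%E) (eta : R) :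
  0 < eta -> exists N, forall j, \sum_(N <= n < N + j) (1 - cabs (a n) ^+ 2) <= eta.
Proof.
move=> eta0.
have c1 n : cabs (a n) < 1 by rewrite -ltcR -normC_cabs.
have u0 n : (0 <= (1 - cabs (a n))%:E)%E by rewrite lee_fin subr_ge0 ltW.
have := nneseries_tail_cvg bl (fun k _ => u0 k).
move/fine_cvgP => [finN].
have e2 : 0 < eta / 2 by rewrite divr_gt0.
move/cvgr0Pnorm_le => /(_ _ e2) h.
have [N _ HN] := filterI finN h.
have [fN lN] := HN N (leqnn N).
exists N => j.
apply: (@le_trans _ _ (2 * \sum_(N <= n < N + j) (1 - cabs (a n)))).
  rewrite mulr_sumr; apply: ler_sum => n _.
  have h0 := @cabs_ge0 _ (a n).
  have h1 := c1 n.
  rewrite -subr_ge0.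
  have -> : 2 * (1 - cabs (a n)) - (1 - cabs (a n) ^+ 2) = (1 - cabs (a n)) ^+ 2.
    by ring.
  exact: sqr_ge0.
suff : \sum_(N <= n < N + j) (1 - cabs (a n)) <= eta / 2 by lra.
have : ((\sum_(N <= n < N + j) (1 - cabs (a n)))%:E <= 
        \big[+%E/0%R]_(N <= k <oo) ((1 - cabs (a k))%:E))%E.
  rewrite -sumEFin; exact: nneseries_lim_ge.
rewrite -(fineK fN) lee_fin => hs; apply: le_trans hs _.
by apply: le_trans lN; exact: ler_norm.
Qed.

Theorem mainTheorem11 (R : realType) (a : nat -> Cx R) (Omega : set (Cx R))
  (m : nat) :
  blaschke_zeros a ->
  approach_region Omega ->
  (exists M : R, forall z, Omega z ->
     (\sum_(0 <= n <oo)
        ((1 - cabs (a n) ^+ 2) / cabs (1 - (a n)^* * z) ^+ (2 * m + 2))%:E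
      <= M%:E)%E) ->
  forall k l : nat, (k <= m)%N -> (l <= m)%N -> (k + l < 2 * m)%N ->
    (fun z => ell1 (fun n => Aseq a k l z n - Aseq a k l 1 n))
      @ within Omega (nbhs (1 : Cx R)) --> 0%E.
Proof.
move=> [a1 bl] [_ _ Osub bnd _] [M hM] k l km lm klm.
have c1 n : cabs (a n) < 1 by rewrite -ltcR -normC_cabs.
set w := fun n => 1 - cabs (a n) ^+ 2.
have w0 n : 0 <= w n.
  rewrite /w subr_ge0 exprn_ile1 //; [exact: cabs_ge0 | exact: ltW].
set x := fun z n => (cabs (1 - (a n)^* * z))^-1.
have x0 z n : 0 <= x z n by rewrite /x invr_ge0 cabs_ge0.
have pq : (k + l + 2 < 2 * m + 2)%N by rewrite ltn_add2r.
have hMp : forall z, Omega z -> forall N,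
    \sum_(0 <= n < N) w n * x z n ^+ (2 * m + 2) <= M.
  move=> z Oz N.
  have -> : \sum_(0 <= n < N) w n * x z n ^+ (2 * m + 2) =
     \sum_(0 <= n < N) ((1 - cabs (a n) ^+ 2) / cabs (1 - (a n)^* * z) ^+ (2 * m + 2)).
    by apply: eq_bigr => n _; rewrite /x /w exprVn.
  rewrite -lee_fin -sumEFin; apply: le_trans (hM z Oz).
  apply: nneseries_lim_ge => n _ _.
  by rewrite lee_fin divr_ge0 // ?exprn_ge0 ?cabs_ge0 // -/(w n).
have Acabs z n : cabs (Aseq a k l z n) = w n * x z n ^+ (k + l + 2).
  exact: cabs_Aseq.
have one_cl : closure Omega 1.
  have : (boundary Omega `&` unit_circle (R:=R)) 1 by rewrite bnd.
  by case=> -[].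
suff key : forall eps : R, 0 < eps -> \forall z \near within Omega (nbhs (1 : Cx R)),
    (ell1 (fun n => (Aseq a k l z n - Aseq a k l 1 n)%R) <= eps%:E)%E.
  have ge0 z : (0 <= ell1 (fun n => (Aseq a k l z n - Aseq a k l 1 n)%R))%E.
    by apply: nneseries_ge0 => n _ _; rewrite lee_fin cabs_ge0.
  have fin z : (ell1 (fun n => (Aseq a k l z n - Aseq a k l 1 n)%R) <= 1%:E)%E ->
      ell1 (fun n => (Aseq a k l z n - Aseq a k l 1 n)%R) \is a fin_num.
    move=> h; rewrite ge0_fin_numE //; apply: le_lt_trans h _; exact: ltry.
  apply/fine_cvgP; split.
    
    have WF : Filter (within Omega (nbhs (1 : Cx R))) by exact: within_filter.
    apply: (filterS _ (key 1 ltr01)) => z; exact: fin.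
  apply/cvgr0Pnorm_le => e e0.
  apply: (filterS _ (filterI (key 1 ltr01) (key e e0))) => z [h1 h2] /=.
  have fz := fin z h1.
  rewrite ger0_norm ?fine_ge0 //.
  by rewrite -lee_fin fineK.
move=> eps eps0.
set e6 := eps / 6.
have e60 : 0 < e6 by rewrite divr_gt0.
have he : e6 * 6 = eps by rewrite /e6; field.
set Ma := `|M|.
have Ma0 : 0 <= Ma by exact: normr_ge0.
set K := 1 + 2 * Ma / e6.
have K1 : 1 <= K by rewrite /K lerDl divr_ge0 // ?mulr_ge0 // ltW.
have K0 : 0 < K by exact: lt_le_trans ltr01 K1.
set p := (k + l + 2)%N.
have Kp0 : 0 < K ^+ p by exact: exprn_gt0.
set eta := e6 / (2 * K ^+ p).
have eta0 : 0 < eta by rewrite divr_gt0 // mulr_gt0.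
have [N HN] := @tail_w R a a1 bl eta eta0.
have tailz : forall z, Omega z -> forall j,
    \sum_(N <= n < N + j) cabs (Aseq a k l z n) <= e6.
  move=> z Oz j.
  apply: (@le_trans _ _ (\sum_(N <= n < N + j)
     (K ^+ p * w n + (w n * x z n ^+ (2 * m + 2)) / K))).
    apply: ler_sum => n _; rewrite Acabs.
    apply: le_trans (ler_wpM2l (w0 n) (@powbound R _ _ _ _ (x0 z n) K1 pq)) _.
    by rewrite le_eqVlt; apply/orP; left; apply/eqP; rewrite mulrDr; congr (_ + _); [exact: mulrC | exact: mulrA].
  rewrite big_split /= -mulr_sumr -mulr_suml.
  have s1 : K ^+ p * \sum_(N <= n < N + j) w n <= e6 / 2.
    apply: le_trans (ler_wpM2l (ltW Kp0) (HN j)) _.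
    rewrite le_eqVlt; apply/orP; left; apply/eqP; rewrite /eta; field; exact: lt0r_neq0.
  have s2 : (\sum_(N <= n < N + j) w n * x z n ^+ (2 * m + 2)) / K <= e6 / 2.
    have hs : \sum_(N <= n < N + j) w n * x z n ^+ (2 * m + 2) <= Ma.
      apply: le_trans _ (le_trans (hMp z Oz (N + j)) (ler_norm M)).
      rewrite (big_cat_nat (leq0n N) (leq_addr j N)) /= lerDr.
      apply: sumr_ge0 => n _; apply: mulr_ge0 => //; exact: exprn_ge0.
    rewrite ler_pdivrMr //; apply: le_trans hs _.
    have -> : e6 / 2 * K = e6 / 2 + Ma by rewrite /K; field; exact: lt0r_neq0.
    rewrite lerDr; apply: ltW; exact: divr_gt0.
  apply: le_trans (lerD s1 s2) _; rewrite -splitr //.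
have tail1 : forall j, \sum_(N <= n < N + j) cabs (Aseq a k l 1 n) <= e6 *+ 2.
  move=> j.
  have [z [Oz hz]] := one_cl _ (@fin_small R a k l a1 N j e6 e60).
  apply: (@le_trans _ _ (\sum_(N <= n < N + j)
     (cabs (Aseq a k l z n - Aseq a k l 1 n) + cabs (Aseq a k l z n)))).
    by apply: ler_sum => n _; exact: cabs_tri'.
  rewrite big_split /= mulr2n; apply: lerD; [exact: ltW | exact: tailz].
have head := @fin_small R a k l a1 0 N e6 e60.
suff : \forall z \near (1 : Cx R), Omega z ->
   (ell1 (fun n => (Aseq a k l z n - Aseq a k l 1 n)%R) <= eps%:E)%E by [].
apply: (filterS _ head) => z hz Oz.
rewrite /ell1; apply: series_le => [n|N2]; first exact: cabs_ge0.
apply: (@le_trans _ _ (\sum_(0 <= n < N + N2) cabs (Aseq a k l z n - Aseq a k l 1 n))).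
  rewrite (big_cat_nat (leq0n N2) (leq_addl N N2)) /= lerDl.
  by apply: sumr_ge0 => n _; exact: cabs_ge0.
rewrite (big_cat_nat (leq0n N) (leq_addr N2 N)) /=.
have h2 : \sum_(N <= n < N + N2) cabs (Aseq a k l z n - Aseq a k l 1 n) <=
   \sum_(N <= n < N + N2) (cabs (Aseq a k l z n) + cabs (Aseq a k l 1 n)).
  by apply: ler_sum => n _; exact: cabs_triB.
rewrite big_split /= in h2.
have tz := tailz z Oz N2.
have t1 := tail1 N2.
rewrite mulr2n in t1.
rewrite add0n in hz.
lra.
Qed.
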